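(* Let $X$ be a normal $k$-space which contains a closed subspace homeomorphic to $K$ and a closed subspace homeomorphic to $V$. Then: (a) $X$ is not homeomorphic to any closed multiplicative subset of a topological group; (b) $X$ is not homeomorphic to any closed convex subset of a (real) linear topological space.
   Context: $K=\{(0,0)\}\cup\{(\tfrac1n,\tfrac1{nm}) : n,m\in\mathbb N\}\subset\mathbb R^2$ with the subspace topology. Let $S_0=\{0\}\cup\{\tfrac1n:n\in\mathbb N\}\subset\mathbb R$ and let $V$ (the Fréchet–Urysohn fan) be the quotient space $(\mathbb N\times S_0)/(\mathbb N\times\{0\})$, where $\mathbb N$ is discrete, i.e. $\mathbb N\times S_0$ with the subset $\mathbb N\times\{0\}$ collapsed to a single point. A subset $A$ of a topological group $G$ is multiplicative if $a\ast b\in A$ for all $a,b\in A$, where $\ast$ is the group operation. A $k$-space is a space in which a set is closed iff its intersection with every compact subset $C$ is closed in $C$. *)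

(* Defs.v *)
From Stdlib Require Import Reals List.
Open Scope R_scope.

(** A topology on a type T is given by its family of open sets. *)
Definition topo (T : Type) := (T -> Prop) -> Prop.

Definition is_topology {T : Type} (O : topo T) : Prop :=
  O (fun _ => True) /\
  (forall U W, O U -> O W -> O (fun x => U x /\ W x)) /\
  (forall F : (T -> Prop) -> Prop, (forall U, F U -> O U) ->
       O (fun x => exists U, F U /\ U x)).

Definition closed {T : Type} (O : topo T) (A : T -> Prop) : Prop :=
  O (fun x => ~ A x).

Definition sub_topo {T : Type} (O : topo T) (A : T -> Prop) : topo {x : T | A x} :=
  fun U => exists W, O W /\ forall a : {x : T | A x}, U a <-> W (proj1_sig a).

Definition prod_topo {T1 T2 : Type} (O1 : topo T1) (O2 : topo T2) : topo (T1 * T2) :=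
  fun U => forall p, U p -> exists U1 U2, O1 U1 /\ O2 U2 /\ U1 (fst p) /\ U2 (snd p) /\
     forall q, U1 (fst q) -> U2 (snd q) -> U q.

(** Quotient space of T by a relation R (an equivalence relation):
    points are the equivalence classes. *)
Definition quot {T : Type} (R : T -> T -> Prop) : Type :=
  {C : T -> Prop | exists y, C = R y}.

Definition qclass {T : Type} (R : T -> T -> Prop) (y : T) : quot R :=
  exist _ (R y) (ex_intro _ y eq_refl).

Definition quot_topo {T : Type} (O : topo T) (R : T -> T -> Prop) : topo (quot R) :=
  fun U => O (fun y => U (qclass R y)).

Definition discrete_topo (T : Type) : topo T := fun _ => True.

Definition continuous {T1 T2 : Type} (O1 : topo T1) (O2 : topo T2) (f : T1 -> T2) : Prop :=
  forall U, O2 U -> O1 (fun x => U (f x)).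

Definition homeomorphic {T1 T2 : Type} (O1 : topo T1) (O2 : topo T2) : Prop :=
  exists (f : T1 -> T2) (g : T2 -> T1),
    (forall x, g (f x) = x) /\ (forall y, f (g y) = y) /\
    continuous O1 O2 f /\ continuous O2 O1 g.

(** Normal space (Engelking's convention: T1 + separation of disjoint closed sets). *)
Definition normal {T : Type} (O : topo T) : Prop :=
  (forall x y : T, x <> y -> exists U, O U /\ U x /\ ~ U y) /\
  (forall A B : T -> Prop, closed O A -> closed O B -> (forall x, A x -> B x -> False) ->
     exists U W, O U /\ O W /\ (forall x, A x -> U x) /\ (forall x, B x -> W x) /\
       (forall x, U x -> W x -> False)).

Definition compact_set {T : Type} (O : topo T) (C : T -> Prop) : Prop :=
  forall F : (T -> Prop) -> Prop, (forall U, F U -> O U) ->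
    (forall x, C x -> exists U, F U /\ U x) ->
    exists l : list (T -> Prop), (forall U, In U l -> F U) /\
      (forall x, C x -> exists U, In U l /\ U x).

(** k-space: a set is closed iff its trace on every compact set C is closed in C
    (the "only if" direction always holds). *)
Definition k_space {T : Type} (O : topo T) : Prop :=
  forall F : T -> Prop,
    (forall C, compact_set O C ->
       exists G, closed O G /\ forall x, C x -> (F x <-> G x)) ->
    closed O F.

Definition R_topo : topo R :=
  fun U => forall x, U x -> exists eps, 0 < eps /\ forall y, Rabs (y - x) < eps -> U y.

Definition R2_topo : topo (R * R) :=
  fun U => forall p, U p -> exists eps, 0 < eps /\
    forall q, sqrt ((fst q - fst p) ^ 2 + (snd q - snd p) ^ 2) < eps -> U q.

Definition K_set (p : R * R) : Prop :=
  p = (0, 0) \/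
  exists n m : nat, (1 <= n)%nat /\ (1 <= m)%nat /\ p = (/ INR n, / (INR n * INR m)).

Definition K_topo : topo {p : R * R | K_set p} := sub_topo R2_topo K_set.

Definition S0_set (x : R) : Prop :=
  x = 0 \/ exists n : nat, (1 <= n)%nat /\ x = / INR n.

Definition S0 : Type := {x : R | S0_set x}.
Definition S0_topo : topo S0 := sub_topo R_topo S0_set.

(** N x S0 with N = {1,2,...} discrete; we index N by nat but only use n >= 1. *)
Definition Npos : Type := {n : nat | (1 <= n)%nat}.
Definition fanbase : Type := (Npos * S0)%type.
Definition fanbase_topo : topo fanbase := prod_topo (discrete_topo Npos) S0_topo.

Definition fan_rel (a b : fanbase) : Prop :=
  a = b \/ (proj1_sig (snd a) = 0 /\ proj1_sig (snd b) = 0).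

Definition V_topo : topo (quot fan_rel) := quot_topo fanbase_topo fan_rel.

(** Topological groups (Hausdorffness not assumed). *)
Definition is_topological_group {G : Type} (O : topo G)
  (mul : G -> G -> G) (inv : G -> G) (e : G) : Prop :=
  is_topology O /\
  (forall x y z, mul x (mul y z) = mul (mul x y) z) /\
  (forall x, mul e x = x) /\ (forall x, mul x e = x) /\
  (forall x, mul (inv x) x = e) /\ (forall x, mul x (inv x) = e) /\
  continuous (prod_topo O O) O (fun p => mul (fst p) (snd p)) /\
  continuous O O inv.

Definition multiplicative {G : Type} (mul : G -> G -> G) (A : G -> Prop) : Prop :=
  forall a b, A a -> A b -> A (mul a b).

(** Real linear topological spaces (Hausdorffness not assumed). *)
Definition is_linear_topological_space {E : Type} (O : topo E)
  (zero : E) (add : E -> E -> E) (opp : E -> E) (scal : R -> E -> E) : Prop :=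
  is_topology O /\
  (forall x y z, add x (add y z) = add (add x y) z) /\
  (forall x y, add x y = add y x) /\
  (forall x, add zero x = x) /\
  (forall x, add (opp x) x = zero) /\
  (forall a x y, scal a (add x y) = add (scal a x) (scal a y)) /\
  (forall a b x, scal (a + b) x = add (scal a x) (scal b x)) /\
  (forall a b x, scal (a * b) x = scal a (scal b x)) /\
  (forall x, scal 1 x = x) /\
  continuous (prod_topo O O) O (fun p => add (fst p) (snd p)) /\
  continuous (prod_topo R_topo O) O (fun p => scal (fst p) (snd p)).

Definition convex {E : Type} (add : E -> E -> E) (scal : R -> E -> E) (A : E -> Prop) : Prop :=
  forall a b t, A a -> A b -> 0 <= t <= 1 -> A (add (scal t a) (scal (1 - t) b)).

(* Main.v *)
Require Import Defs.
From Stdlib Require Import Reals List Lra Lia Classical ClassicalEpsilon FunctionalExtensionality PropExtensionality ProofIrrelevance.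
Open Scope R_scope.

Definition cl {T} (O : topo T) (s : nat -> T) (z : T) : Prop :=
  forall W, O W -> W z -> forall M, exists m, (M <= m)%nat /\ W (s m).

Definition cont2 {G} (O : topo G) (f : G -> G -> G) : Prop :=
  forall x y W, O W -> W (f x y) -> exists U1 U2, O U1 /\ O U2 /\ U1 x /\ U2 y /\
    forall u v, U1 u -> U2 v -> W (f u v).

Lemma L_cont {T1 T2} (O1 : topo T1) (O2 : topo T2) (f : T1 -> T2) s t z :
  continuous O1 O2 f -> (forall m, t m = f (s m)) -> cl O1 s z -> cl O2 t (f z).
Proof.
  intros Hf Ht Hc W HW Wz M.
  destruct (Hc _ (Hf W HW) Wz M) as [m [Hm Wm]]. exists m. rewrite Ht. auto.
Qed.

Lemma L_sub_lift {T} (O : topo T) (A : T -> Prop) (u : nat -> {x | A x}) zs w :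
  proj1_sig zs = w -> cl O (fun m => proj1_sig (u m)) w -> cl (sub_topo O A) u zs.
Proof.
  intros Hw Hc W [W' [HW' HE]] Wz M.
  apply HE in Wz. subst w.
  destruct (Hc W' HW' Wz M) as [m [Hm Wm]]. exists m. split; auto. apply HE; auto.
Qed.

Lemma L_closed {T} (O : topo T) (A : T -> Prop) s z :
  closed O A -> (forall m, A (s m)) -> cl O s z -> A z.
Proof.
  intros HA Hs Hc. apply NNPP; intro Hz.
  destruct (Hc _ HA Hz 0%nat) as [m [_ Hm]]. apply Hm, Hs.
Qed.

Lemma val_cont {T} (O : topo T) (A : T -> Prop) :
  continuous (sub_topo O A) O (@proj1_sig T A).
Proof. intros U HU. exists U. split; auto. tauto. Qed.

Lemma comp_cont {T1 T2 T3} (O1 : topo T1) (O2 : topo T2) (O3 : topo T3) f g :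
  continuous O1 O2 f -> continuous O2 O3 g -> continuous O1 O3 (fun x => g (f x)).
Proof. intros Hf Hg U HU. apply (Hf (fun y => U (g y))), Hg, HU. Qed.

Lemma open_local {T} (O : topo T) (Q : T -> Prop) : is_topology O ->
  (forall y, Q y -> exists U, O U /\ U y /\ forall x, U x -> Q x) -> O Q.
Proof.
  intros [_ [_ Hu]] H.
  set (F := fun U => O U /\ forall x, U x -> Q x).
  assert (E : (fun x => exists U, F U /\ U x) = Q).
  { apply functional_extensionality; intro x; apply propositional_extensionality; split.
    - intros [U [[_ HU] Ux]]; auto.
    - intro Qx. destruct (H x Qx) as [U [HU [Ux HQ]]]. exists U. split; auto. split; auto. }
  rewrite <- E. apply Hu. intros U [HU _]; auto.
Qed.

Lemma finite_closed {T} (O : topo T) (P : T -> Prop) (L : list T) :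
  is_topology O -> (forall x y : T, x <> y -> exists U, O U /\ U x /\ ~ U y) ->
  (forall x, P x -> In x L) -> closed O P.
Proof.
  intros Ht HT1 HL. unfold closed. apply open_local; auto.
  revert P HL. induction L as [|x0 L IH]; intros P HL y Py.
  - exists (fun _ => True). split; [apply Ht|]. split; auto.
    intros x _ Px. apply (HL x Px).
  - destruct (IH (fun x => P x /\ x <> x0)) with (y := y) as [U' [HU' [U'y HU'P]]].
    + intros x [Px Hx]. destruct (HL x Px); [congruence|auto].
    + tauto.
    + destruct (classic (x0 = y)) as [E|E].
      * subst x0. exists U'. split; auto. split; auto.
        intros x Ux Px. destruct (classic (x = y)) as [->|Nx]; [tauto|].
        apply (HU'P x Ux); auto.
      * destruct (HT1 y x0 (not_eq_sym E)) as [U0 [HU0 [U0y U0x0]]].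
        exists (fun x => U' x /\ U0 x). split; [apply Ht; auto|]. split; auto.
        intros x [Ux U0x] Px. destruct (classic (x = x0)) as [->|Nx]; [tauto|].
        apply (HU'P x Ux); auto.
Qed.

Lemma cluster_compact {T} (O : topo T) (C : T -> Prop) (s : nat -> T) :
  compact_set O C -> (forall M, exists m, (M <= m)%nat /\ C (s m)) ->
  exists z, C z /\ forall W, O W -> W z -> forall M, exists m, (M <= m)%nat /\ W (s m).
Proof.
  intros Hc Hf. apply NNPP; intro Hn.
  set (F := fun W => O W /\ exists M, forall m, (M <= m)%nat -> C (s m) -> ~ W (s m)).
  destruct (Hc F) as [l [Hl Hcov]].
  - intros U [HU _]; auto.
  - intros x Cx. apply NNPP; intro Hx. apply Hn. exists x. split; auto.
    intros W HW Wx M. apply NNPP; intro HM. apply Hx. exists W. split; auto.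
    split; auto. exists M. intros m Hm Cm Wm. apply HM. exists m; auto.
  - assert (HB : exists M, forall W, In W l -> forall m, (M <= m)%nat -> C (s m) -> ~ W (s m)).
    { clear Hcov. induction l as [|W0 l IH].
      - exists 0%nat. intros W [].
      - destruct IH as [M1 HM1]. { intros U HU. apply Hl. right; auto. }
        destruct (Hl W0 (or_introl eq_refl)) as [_ [M0 HM0]].
        exists (Nat.max M0 M1). intros W [<-|HW] m Hm.
        + apply HM0. lia.
        + apply HM1; auto. lia. }
    destruct HB as [M HM]. destruct (Hf M) as [m [Hm Cm]].
    destruct (Hcov _ Cm) as [W [HW Wm]]. exact (HM W HW m Hm Cm Wm).
Qed.

Lemma unif_bound (Q : nat -> nat -> Prop) :
  (forall n, exists M, forall m, (M <= m)%nat -> Q n m) ->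
  forall N, exists M, forall n m, (n < N)%nat -> (M <= m)%nat -> Q n m.
Proof.
  intros H N. induction N as [|N IH].
  - exists 0%nat. intros; lia.
  - destruct IH as [M1 H1]. destruct (H N) as [M0 H0].
    exists (Nat.max M0 M1). intros n m Hn Hm.
    destruct (Nat.eq_dec n N) as [->|Hne].
    + apply H0; lia.
    + apply H1; lia.
Qed.

Lemma core (X G : Type) (OX : topo X) (OG : topo G) (AG : G -> Prop)
  (phi : X -> {g | AG g}) (psi : {g | AG g} -> X)
  (hpp : forall x, psi (phi x) = x) (hqq : forall s, phi (psi s) = s)
  (cphi : continuous OX (sub_topo OG AG) phi) (cpsi : continuous (sub_topo OG AG) OX psi)
  (mu lam rho : G -> G -> G) (cmu : cont2 OG mu) (clam : cont2 OG lam) (crho : cont2 OG rho)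
  (hlam : forall x y, lam (mu x y) y = x) (hrho : forall x y, rho x (mu x y) = y)
  (hmu : forall x y, AG x -> AG y -> AG (mu x y))
  (a b : G) (an bn : nat -> nat -> G) (Aa : AG a) (Ab : AG b)
  (Aan : forall n m, AG (an n m)) (Abn : forall n m, AG (bn n m))
  (Ka : forall W, OG W -> W a -> exists N, forall n m, (N <= n)%nat -> W (an n m))
  (Kb : forall n z, ~ cl OG (an n) z)
  (Va : forall W, OG W -> W b -> forall i, exists J, forall j, (J <= j)%nat -> W (bn i j))
  (Vb : forall (j : nat -> nat) z, ~ cl OG (fun n => bn n (j n)) z)
  (topX : is_topology OX)
  (T1X : forall x y : X, x <> y -> exists U, OX U /\ U x /\ ~ U y)
  (kX : k_space OX) : False.
Proof.
  set (c := fun n m => mu (an n m) (bn n m)).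
  set (xc := fun n m => psi (exist _ (c n m) (hmu _ _ (Aan n m) (Abn n m)))).
  assert (Hxc : forall n m, proj1_sig (phi (xc n m)) = c n m).
  { intros. unfold xc. rewrite hqq. reflexivity. }
  assert (cvp : continuous OX OG (fun x => proj1_sig (phi x))).
  { apply comp_cont with (O2 := sub_topo OG AG); auto. apply val_cont. }
  assert (Htr : forall (t : nat -> X) (C : X -> Prop) z, 
     (forall W, OX W -> W z -> forall M, exists m, (M <= m)%nat /\ W (t m)) ->
     forall W, OG W -> W (proj1_sig (phi z)) -> forall M, exists m, (M <= m)%nat /\ W (proj1_sig (phi (t m)))).
  { intros t C z Hz W HW Wz M. exact (Hz _ (cvp W HW) Wz M). }
  assert (F1 : forall C, compact_set OX C -> forall n, exists M, forall m, (M <= m)%nat -> ~ C (xc n m)).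
  { intros C HC n. apply NNPP; intro H.
    assert (Hf : forall M, exists m, (M <= m)%nat /\ C (xc n m)).
    { intro M. apply NNPP; intro H2. apply H. exists M. intros m Hm Cm. apply H2. exists m; auto. }
    destruct (cluster_compact OX C (xc n) HC Hf) as [z [Cz Hz]].
    set (g := proj1_sig (phi z)).
    apply (Kb n (lam g b)). intros W HW Wz M.
    destruct (clam g b W HW Wz) as [U1 [U2 [HU1 [HU2 [U1g [U2b HU]]]]]].
    destruct (Va U2 HU2 U2b n) as [J HJ].
    destruct (Htr (xc n) C z Hz U1 HU1 U1g (Nat.max M J)) as [m [Hm U1m]].
    exists m. split; [lia|]. rewrite Hxc in U1m.
    rewrite <- (hlam (an n m) (bn n m)). apply HU; auto. apply HJ. lia. }
  assert (F2 : forall C, compact_set OX C -> exists N, forall n m, (N <= n)%nat -> ~ C (xc n m)).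
  { intros C HC. apply NNPP; intro H.
    assert (Hf0 : forall N, exists n, (N <= n)%nat /\ exists m, C (xc n m)).
    { intro N. apply NNPP; intro H2. apply H. exists N. intros n m Hn Cm. apply H2. exists n. eauto. }
    set (j := fun n => epsilon (inhabits 0%nat) (fun m => C (xc n m))).
    assert (Hf : forall M, exists n, (M <= n)%nat /\ C (xc n (j n))).
    { intro M. destruct (Hf0 M) as [n [Hn Hm]]. exists n. split; auto.
      exact (epsilon_spec (inhabits 0%nat) (fun m => C (xc n m)) Hm). }
    destruct (cluster_compact OX C (fun n => xc n (j n)) HC Hf) as [z [Cz Hz]].
    set (g := proj1_sig (phi z)).
    apply (Vb j (rho a g)). intros W HW Wz M.
    destruct (crho a g W HW Wz) as [U1 [U2 [HU1 [HU2 [U1a [U2g HU]]]]]].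
    destruct (Ka U1 HU1 U1a) as [N0 HN0].
    destruct (Htr _ C z Hz U2 HU2 U2g (Nat.max M N0)) as [n [Hn U2n]].
    exists n. split; [lia|]. rewrite Hxc in U2n.
    rewrite <- (hrho (an n (j n)) (bn n (j n))). apply HU; auto. apply HN0. lia. }
  set (p := mu a b).
  set (S' := fun x => exists n m, x = xc n m /\ c n m <> p).
  assert (HS : closed OX S').
  { apply kX. intros C HC.
    destruct (F2 C HC) as [N HN].
    destruct (unif_bound (fun n m => ~ C (xc n m)) (F1 C HC) N) as [M HM].
    exists (fun x => S' x /\ exists n m, (n < N)%nat /\ (m < M)%nat /\ x = xc n m).
    split.
    - apply finite_closed with
        (L := flat_map (fun n => map (fun m => xc n m) (seq 0 M)) (seq 0 N)); auto.
      intros x [_ [n [m [Hn [Hm ->]]]]]. apply in_flat_map. exists n.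
      split; [apply in_seq; lia|]. apply in_map_iff. exists m. split; auto. apply in_seq; lia.
    - intros x Cx. split; [|tauto]. intros Sx. split; auto.
      destruct Sx as [n [m [-> Hne]]]. exists n, m.
      assert (n < N)%nat. { destruct (Compare_dec.le_lt_dec N n) as [h|h]; auto. exfalso. exact (HN n m h Cx). }
      assert (m < M)%nat. { destruct (Compare_dec.le_lt_dec M m) as [h|h]; auto. exfalso. exact (HM n m H h Cx). }
      auto. }
  set (xp := psi (exist _ p (hmu _ _ Aa Ab))).
  assert (nSxp : ~ S' xp).
  { intros [n [m [E Hne]]]. apply Hne. apply (f_equal phi) in E.
    apply (f_equal (@proj1_sig _ _)) in E. unfold xp in E. rewrite hqq in E.
    rewrite Hxc in E. simpl in E. auto. }
  destruct (cpsi _ HS) as [WG [HWG HE]].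
  assert (WGp : WG p).
  { apply (HE (exist _ p (hmu _ _ Aa Ab))). exact nSxp. }
  destruct (cmu a b WG HWG WGp) as [U1 [U2 [HU1 [HU2 [U1a [U2b HU]]]]]].
  destruct (Ka U1 HU1 U1a) as [N HN].
  destruct (Va U2 HU2 U2b N) as [J HJ].
  assert (Hm : exists m, (J <= m)%nat /\ c N m <> p).
  { apply NNPP; intro H.
    assert (Heq : forall m, (J <= m)%nat -> c N m = p).
    { intros m Hm. apply NNPP; intro Hn. apply H. eauto. }
    apply (Kb N (lam p b)). intros W HW Wz M.
    destruct (clam p b W HW Wz) as [V1 [V2 [HV1 [HV2 [V1p [V2b HV]]]]]].
    destruct (Va V2 HV2 V2b N) as [J' HJ'].
    exists (Nat.max M (Nat.max J J')). split; [lia|].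
    set (m := Nat.max M (Nat.max J J')).
    rewrite <- (hlam (an N m) (bn N m)). fold (c N m). rewrite Heq by lia.
    apply HV; auto. apply HJ'. lia. }
  destruct Hm as [m [Hm Hne]].
  assert (WGc : WG (c N m)) by (apply HU; [apply HN; lia | apply HJ; lia]).
  apply (HE (exist _ (c N m) (hmu _ _ (Aan N m) (Abn N m)))) in WGc.
  apply WGc. exists N, m. split; auto.
Qed.

Definition kpt : Type := {p : R * R | K_set p}.
Definition kp (n m : nat) : kpt :=
  exist _ (/ INR (S n), / (INR (S n) * INR (S m)))
    (or_intror (ex_intro _ (S n) (ex_intro _ (S m)
       (conj (le_n_S _ _ (Nat.le_0_l n)) (conj (le_n_S _ _ (Nat.le_0_l m)) eq_refl))))).
Definition k0 : kpt := exist _ (0, 0) (or_introl eq_refl).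

Lemma abs_le_sqrt a b : Rabs a <= sqrt (a ^ 2 + b ^ 2).
Proof.
  rewrite <- sqrt_Rsqr_abs. apply sqrt_le_1_alt. unfold Rsqr. nra.
Qed.

Lemma R2_open_fst_lt c : R2_topo (fun p => fst p < c).
Proof.
  intros p Hp. exists (c - fst p). split; [lra|]. intros q Hq.
  pose proof (abs_le_sqrt (fst q - fst p) (snd q - snd p)).
  pose proof (Rle_abs (fst q - fst p)). lra.
Qed.

Lemma R2_open_snd_gt c : R2_topo (fun p => c < snd p).
Proof.
  intros p Hp. exists (snd p - c). split; [lra|]. intros q Hq.
  pose proof (abs_le_sqrt (snd q - snd p) (fst q - fst p)).
  rewrite Rplus_comm in H.
  pose proof (Rle_abs (-(snd q - snd p))). rewrite Rabs_Ropp in H0. lra.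
Qed.

Lemma INR_S_pos n : 0 < INR (S n).
Proof. apply lt_0_INR. lia. Qed.

Lemma INR_S_ge1 n : 1 <= INR (S n).
Proof. apply (le_INR 1). lia. Qed.

Lemma inv_S_le N n : (N <= n)%nat -> (0 < N)%nat -> / INR (S n) <= / INR N.
Proof.
  intros H H0. apply Rinv_le_contravar. apply lt_0_INR; lia. apply le_INR; lia.
Qed.

Lemma K_geo1 (O : kpt -> Prop) : K_topo O -> O k0 ->
  exists N, forall n m, (N <= n)%nat -> O (kp n m).
Proof.
  intros [W [HW HE]] Hk0. apply HE in Hk0. simpl in Hk0.
  destruct (HW _ Hk0) as [eps [Heps Hb]].
  destruct (archimed_cor1 (eps / 2)) as [N [HN HN0]]; [lra|].
  exists N. intros n m Hn. apply HE. cbn [fst snd proj1_sig kp]. apply Hb. cbn [fst snd].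
  set (x := / INR (S n)). set (y := / (INR (S n) * INR (S m))).
  assert (Hx : 0 < x <= / INR N).
  { split. apply Rinv_0_lt_compat, INR_S_pos. apply inv_S_le; auto. }
  assert (Hy : 0 < y <= x).
  { unfold y, x. rewrite Rinv_mult. pose proof (INR_S_pos n). pose proof (INR_S_ge1 m).
    pose proof (Rinv_0_lt_compat _ H). split.
    - apply Rmult_lt_0_compat; auto. apply Rinv_0_lt_compat; lra.
    - assert (/ INR (S m) <= 1). { rewrite <- Rinv_1. apply Rinv_le_contravar; lra. }
      assert (0 < / INR (S m)) by (apply Rinv_0_lt_compat; lra). nra. }
  replace (x - 0) with x by ring. replace (y - 0) with y by ring.
  rewrite <- (sqrt_pow2 eps) by lra. apply sqrt_lt_1_alt. split.
  - nra.
  - assert (x < eps / 2) by lra.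
    assert (x * x < eps / 2 * (eps / 2)) by (apply Rmult_le_0_lt_compat; lra).
    assert (y * y <= x * x) by (apply Rmult_le_compat; lra).
    replace (x ^ 2 + y ^ 2) with (x * x + y * y) by ring.
    replace (eps ^ 2) with (eps * eps) by ring. nra.
Qed.

Lemma K_geo2 n q : ~ cl K_topo (kp n) q.
Proof.
  intros Hc. destruct q as [p Hp].
  destruct Hp as [Hp | [n' [m' [Hn' [Hm' Hp]]]]].
  - set (O := fun s : kpt => fst (proj1_sig s) < / INR (S n)).
    assert (HO : K_topo O) by (exists (fun p => fst p < / INR (S n)); split;
      [apply R2_open_fst_lt | unfold O; tauto]).
    destruct (Hc O HO) with (M := 0%nat) as [m [_ Hm]].
    + unfold O. simpl. subst p. simpl. apply Rinv_0_lt_compat, INR_S_pos.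
    + unfold O in Hm. simpl in Hm. lra.
  - set (y' := snd p).
    assert (Hy' : 0 < y').
    { unfold y'. subst p. simpl. apply Rinv_0_lt_compat. apply Rmult_lt_0_compat; apply lt_0_INR; lia. }
    set (O := fun s : kpt => y' / 2 < snd (proj1_sig s)).
    assert (HO : K_topo O) by (exists (fun p => y' / 2 < snd p); split;
      [apply R2_open_snd_gt | unfold O; tauto]).
    destruct (archimed_cor1 (y' / 2)) as [N [HN HN0]]; [lra|].
    destruct (Hc O HO) with (M := N) as [m [Hm Om]].
    + unfold O. change (y' / 2 < y'). lra.
    + unfold O in Om. cbn [kp proj1_sig snd] in Om. rewrite Rinv_mult in Om.
      pose proof (INR_S_ge1 n). pose proof (inv_S_le N m Hm HN0).
      assert (0 < / INR (S n) <= 1). { split. apply Rinv_0_lt_compat; lra.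
        rewrite <- Rinv_1. apply Rinv_le_contravar; lra. }
      assert (0 < / INR (S m)) by (apply Rinv_0_lt_compat, INR_S_pos). nra.
Qed.

Definition n1 : Defs.Npos := exist _ 1%nat (le_n 1).
Definition s0 : S0 := exist _ 0 (or_introl eq_refl).
Definition vc : quot fan_rel := qclass fan_rel (n1, s0).
Definition npos (i : nat) : Defs.Npos := exist (fun n => (1 <= n)%nat) (S i) (le_n_S _ _ (Nat.le_0_l i)).
Definition sj (j : nat) : S0 := exist _ (/ INR (S j))
  (or_intror (ex_intro _ (S j) (conj (le_n_S _ _ (Nat.le_0_l j)) eq_refl))).
Definition vp (i j : nat) : quot fan_rel := qclass fan_rel (npos i, sj j).

Lemma qclass_center (y : fanbase) : proj1_sig (snd y) = 0 -> qclass fan_rel y = vc.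
Proof.
  intro Hy. unfold vc, qclass. apply subset_eq_compat.
  apply functional_extensionality; intro w; apply propositional_extensionality.
  unfold fan_rel. simpl. split.
  - intros [<-|[_ H]]; right; auto.
  - intros [<-|[_ H]]; right; auto.
Qed.

Lemma quot_destruct (z : quot fan_rel) : exists y, z = qclass fan_rel y.
Proof. destruct z as [C [y E]]. exists y. apply subset_eq_compat. auto. Qed.

Lemma S0_open_lt c : S0_topo (fun s => proj1_sig s < c).
Proof.
  exists (fun x => x < c). split; [|tauto].
  intros x Hx. exists (c - x). split; [lra|]. intros y Hy.
  pose proof (Rle_abs (y - x)). lra.
Qed.

Lemma S0_open_pos : S0_topo (fun s => 0 < proj1_sig s).
Proof.
  exists (fun x => 0 < x). split; [|tauto].
  intros x Hx. exists x. split; [lra|]. intros y Hy.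
  pose proof (Rle_abs (-(y - x))). rewrite Rabs_Ropp in H. lra.
Qed.

Lemma V_geo1 (O : quot fan_rel -> Prop) : V_topo O -> O vc ->
  forall i, exists J, forall j, (J <= j)%nat -> O (vp i j).
Proof.
  intros HO Hvc i.
  assert (Hp : O (qclass fan_rel (npos i, s0))) by (rewrite qclass_center; auto).
  destruct (HO _ Hp) as [U1 [U2 [_ [[W [HW HE]] [U1i [U2s HU]]]]]].
  simpl in U1i, U2s. apply HE in U2s. simpl in U2s.
  destruct (HW _ U2s) as [eps [Heps Hb]].
  destruct (archimed_cor1 eps) as [N [HN HN0]]; auto.
  exists N. intros j Hj. apply (HU (npos i, sj j)); auto.
  apply HE. cbn [proj1_sig sj]. apply Hb. rewrite Rminus_0_r.
  pose proof (inv_S_le N j Hj HN0).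
  cbn [proj1_sig snd sj] in *. rewrite Rabs_right. lra. left. apply Rinv_0_lt_compat, INR_S_pos.
Qed.

Lemma V_geo2 (j : nat -> nat) z : ~ cl V_topo (fun n => vp n (j n)) z.
Proof.
  intro Hc. destruct (quot_destruct z) as [y ->].
  destruct (proj2_sig (snd y)) as [H0 | [k [Hk Hyk]]].
  - set (t := fun w : fanbase => / INR (S (j (pred (proj1_sig (fst w)))))).
    set (O := fun c : quot fan_rel => exists w, proj1_sig c w /\ proj1_sig (snd w) < t w).
    assert (HO : V_topo O).
    { intros y' [w [Hw Hlt]].
      assert (Hlt' : proj1_sig (snd y') < t y').
      { destruct Hw as [<-|[H1 H2]]; auto. rewrite H1. apply Rinv_0_lt_compat, INR_S_pos. }
      exists (fun n => n = fst y'), (fun s => proj1_sig s < t y').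
      split; [exact I|]. split; [apply S0_open_lt|]. split; auto. split; auto.
      intros q Hq1 Hq2. exists q. split; [left; auto|]. unfold t. rewrite Hq1. auto. }
    destruct (Hc O HO) with (M := 0%nat) as [m [_ [w [Hw Hlt]]]].
    + exists y. split; [left; auto|]. rewrite H0. apply Rinv_0_lt_compat, INR_S_pos.
    + simpl in Hw. destruct Hw as [<-|[H1 H2]].
      * unfold t in Hlt. simpl in Hlt. lra.
      * cbn [proj1_sig snd sj] in H1. pose proof (INR_S_pos (j m)). pose proof (Rinv_0_lt_compat _ H). lra.
  - assert (Hpos : 0 < proj1_sig (snd y)).
    { rewrite Hyk. apply Rinv_0_lt_compat, lt_0_INR. lia. }
    set (O := fun c : quot fan_rel => exists w, proj1_sig c w /\
          proj1_sig (fst w) = proj1_sig (fst y) /\ 0 < proj1_sig (snd w)).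
    assert (HO : V_topo O).
    { intros y' [w [Hw [Hf Hs]]].
      destruct Hw as [<-|[H1 H2]]; [|lra].
      exists (fun n => n = fst y'), (fun s => 0 < proj1_sig s).
      split; [exact I|]. split; [apply S0_open_pos|]. split; auto. split; auto.
      intros q Hq1 Hq2. exists q. split; [left; auto|]. rewrite Hq1. auto. }
    destruct (Hc O HO) with (M := proj1_sig (fst y)) as [m [Hm [w [Hw [Hf Hs]]]]].
    + exists y. split; [left; auto|]. auto.
    + simpl in Hw. destruct Hw as [<-|[H1 H2]].
      * simpl in Hf. lia.
      * lra.
Qed.

Lemma cl_pull {T X G : Type} (OT : topo T) (OX : topo X) (OG : topo G)
  (AK : X -> Prop) (AG : G -> Prop) (fK : {x | AK x} -> T) (gK : T -> {x | AK x})
  (phi : X -> {g | AG g}) (psi : {g | AG g} -> X) :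
  closed OX AK -> closed OG AG -> (forall x, psi (phi x) = x) -> (forall t, fK (gK t) = t) ->
  continuous (sub_topo OG AG) OX psi -> continuous (sub_topo OX AK) OT fK ->
  forall (s : nat -> T) z, cl OG (fun m => proj1_sig (phi (proj1_sig (gK (s m))))) z ->
  exists q, cl OT s q.
Proof.
  intros HAK HAG hpp hfg cpsi cfK s z Hc.
  assert (Hz : AG z) by (apply (L_closed OG AG _ z HAG (fun m => proj2_sig _) Hc)).
  pose proof (L_sub_lift OG AG (fun m => phi (proj1_sig (gK (s m)))) (exist _ z Hz) z eq_refl Hc) as H1.
  pose proof (L_cont _ _ psi _ (fun m => proj1_sig (gK (s m))) _ cpsi (fun m => eq_sym (hpp _)) H1) as H2.
  assert (Hk : AK (psi (exist _ z Hz))) by (apply (L_closed OX AK _ _ HAK (fun m => proj2_sig (gK (s m))) H2)).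
  pose proof (L_sub_lift OX AK (fun m => gK (s m)) (exist _ _ Hk) _ eq_refl H2) as H3.
  pose proof (L_cont _ _ fK _ s _ cfK (fun m => eq_sym (hfg _)) H3) as H4.
  eauto.
Qed.

Lemma core2 (X G : Type) (OX : topo X) (OG : topo G) (AG : G -> Prop)
  (phi : X -> {g | AG g}) (psi : {g | AG g} -> X)
  (hpp : forall x, psi (phi x) = x) (hqq : forall s, phi (psi s) = s)
  (cphi : continuous OX (sub_topo OG AG) phi) (cpsi : continuous (sub_topo OG AG) OX psi)
  (HAG : closed OG AG)
  (mu lam rho : G -> G -> G) (cmu : cont2 OG mu) (clam : cont2 OG lam) (crho : cont2 OG rho)
  (hlam : forall x y, lam (mu x y) y = x) (hrho : forall x y, rho x (mu x y) = y)
  (hmu : forall x y, AG x -> AG y -> AG (mu x y)) :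
  is_topology OX -> normal OX -> k_space OX ->
  (exists A : X -> Prop, closed OX A /\ homeomorphic (sub_topo OX A) K_topo) ->
  (exists B : X -> Prop, closed OX B /\ homeomorphic (sub_topo OX B) V_topo) -> False.
Proof.
  intros topX [T1X _] kX [AK [HAK [fK [gK [hgf [hfg [cfK cgK]]]]]]]
    [BV [HBV [fV [gV [hgfV [hfgV [cfV cgV]]]]]]].
  set (FK := fun q => proj1_sig (phi (proj1_sig (gK q)))).
  set (FV := fun q => proj1_sig (phi (proj1_sig (gV q)))).
  assert (cFK : continuous K_topo OG FK).
  { apply (comp_cont K_topo (sub_topo OG AG) OG (fun q => phi (proj1_sig (gK q))) (@proj1_sig _ _)); [|apply val_cont].
    apply (comp_cont K_topo OX (sub_topo OG AG) (fun q => proj1_sig (gK q)) phi); [|auto].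
    apply (comp_cont K_topo (sub_topo OX AK) OX gK (@proj1_sig _ _)); [auto|apply val_cont]. }
  assert (cFV : continuous V_topo OG FV).
  { apply (comp_cont V_topo (sub_topo OG AG) OG (fun q => phi (proj1_sig (gV q))) (@proj1_sig _ _)); [|apply val_cont].
    apply (comp_cont V_topo OX (sub_topo OG AG) (fun q => proj1_sig (gV q)) phi); [|auto].
    apply (comp_cont V_topo (sub_topo OX BV) OX gV (@proj1_sig _ _)); [auto|apply val_cont]. }
  apply (core X G OX OG AG phi psi hpp hqq cphi cpsi mu lam rho cmu clam crho hlam hrho hmu
    (FK k0) (FV vc) (fun n m => FK (kp n m)) (fun n m => FV (vp n m)));
    try (intros; apply proj2_sig); auto.
  - intros W HW Wa. exact (K_geo1 (fun q => W (FK q)) (cFK W HW) Wa).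
  - intros n z Hc. destruct (cl_pull K_topo OX OG AK AG fK gK phi psi HAK HAG hpp hfg cpsi cfK
      (kp n) z Hc) as [q Hq]. exact (K_geo2 n q Hq).
  - intros W HW Wb. exact (V_geo1 (fun q => W (FV q)) (cFV W HW) Wb).
  - intros j z Hc. destruct (cl_pull V_topo OX OG BV AG fV gV phi psi HBV HAG hpp hfgV cpsi cfV
      (fun n => vp n (j n)) z Hc) as [q Hq]. exact (V_geo2 j q Hq).
Qed.

Lemma prod_cont2 {G} (O : topo G) f :
  continuous (prod_topo O O) O (fun p => f (fst p) (snd p)) -> cont2 O f.
Proof.
  intros Hc x y W HW Wxy. destruct (Hc W HW (x, y) Wxy) as [U1 [U2 [H1 [H2 [U1x [U2y HU]]]]]].
  exists U1, U2. repeat split; auto. intros u v Uu Uv. exact (HU (u, v) Uu Uv).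
Qed.

Lemma cont2_comp {G} (O : topo G) f h1 h2 :
  cont2 O f -> continuous O O h1 -> continuous O O h2 -> cont2 O (fun x y => f (h1 x) (h2 y)).
Proof.
  intros Hf H1 H2 x y W HW Wxy.
  destruct (Hf _ _ W HW Wxy) as [U1 [U2 [HU1 [HU2 [U1x [U2y HU]]]]]].
  exists (fun u => U1 (h1 u)), (fun v => U2 (h2 v)). repeat split; auto.
Qed.

Lemma id_cont {G} (O : topo G) : continuous O O (fun x => x).
Proof. intros U HU. exact HU. Qed.

Lemma scal_cont {E} (O : topo E) (scal : R -> E -> E) : is_topology O ->
  continuous (prod_topo R_topo O) O (fun p => scal (fst p) (snd p)) ->
  forall t, continuous O O (scal t).
Proof.
  intros Ht Hc t U HU. apply open_local; auto. intros y Uy.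
  destruct (Hc U HU (t, y) Uy) as [U1 [U2 [_ [H2 [U1t [U2y HU']]]]]].
  exists U2. repeat split; auto. intros x U2x. exact (HU' (t, x) U1t U2x).
Qed.

Theorem theorem1 (X : Type) (OX : topo X) :
  is_topology OX -> normal OX -> k_space OX ->
  (exists A : X -> Prop, closed OX A /\ homeomorphic (sub_topo OX A) K_topo) ->
  (exists B : X -> Prop, closed OX B /\ homeomorphic (sub_topo OX B) V_topo) ->
  (forall (G : Type) (OG : topo G) (mul : G -> G -> G) (inv : G -> G) (e : G),
     is_topological_group OG mul inv e ->
     forall A : G -> Prop, closed OG A -> multiplicative mul A ->
       ~ homeomorphic OX (sub_topo OG A)) /\
  (forall (E : Type) (OE : topo E) (zero : E) (add : E -> E -> E) (opp : E -> E)
     (scal : R -> E -> E),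
     is_linear_topological_space OE zero add opp scal ->
     forall A : E -> Prop, closed OE A -> convex add scal A ->
       ~ homeomorphic OX (sub_topo OE A)).
Proof.
  intros topX normX kX HK HV. split.
  - intros G OG mul inv e [top [assoc [el [er [il [ir [cm ci]]]]]]] A HA Hmul
      [phi [psi [hpp [hqq [cphi cpsi]]]]].
    pose proof (prod_cont2 OG mul cm) as cmul.
    apply (core2 X G OX OG A phi psi hpp hqq cphi cpsi HA mul
      (fun z y => mul z (inv y)) (fun x z => mul (inv x) z)); auto.
    + exact (cont2_comp OG mul _ _ cmul (id_cont OG) ci).
    + exact (cont2_comp OG mul _ _ cmul ci (id_cont OG)).
    + intros x y. rewrite <- assoc, ir, er. auto.
    + intros x y. rewrite assoc, il, el. auto.
  - intros E OE zero add opp scal [top [assoc [comm [zl [il [sd [sp [sm [s1 [ca cs]]]]]]]]]]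
      A HA Hcv [phi [psi [hpp [hqq [cphi cpsi]]]]].
    pose proof (prod_cont2 OE add ca) as cadd.
    pose proof (scal_cont OE scal top cs) as csc.
    assert (s0 : forall x, scal 0 x = zero).
    { intro x. set (u := scal 0 x).
      assert (Hu : u = add u u) by (unfold u; rewrite <- sp, Rplus_0_r; auto).
      transitivity (add (add (opp u) u) u); [rewrite il, zl; auto|].
      rewrite <- assoc, <- Hu. apply il. }
    assert (zr : forall x, add x zero = x) by (intro; rewrite comm; auto).
    apply (core2 X E OX OE A phi psi hpp hqq cphi cpsi HA
      (fun x y => add (scal (/ 2) x) (scal (1 - / 2) y))
      (fun z y => add (scal 2 z) (scal (-1) y))
      (fun x z => add (scal (-1) x) (scal 2 z))); auto.
    + exact (cont2_comp OE add _ _ cadd (csc _) (csc _)).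
    + exact (cont2_comp OE add _ _ cadd (csc _) (csc _)).
    + exact (cont2_comp OE add _ _ cadd (csc _) (csc _)).
    + intros x y. rewrite sd, <- !sm.
      replace (2 * / 2) with 1 by field. replace (2 * (1 - / 2)) with 1 by field.
      rewrite !s1, <- assoc.
      replace (add y (scal (-1) y)) with zero; [apply zr|].
      rewrite <- (s1 y) at 1. rewrite <- sp. replace (1 + -1) with 0 by ring. rewrite s0. auto.
    + intros x y. rewrite sd, <- !sm.
      replace (2 * / 2) with 1 by field. replace (2 * (1 - / 2)) with 1 by field.
      rewrite assoc, <- sp. replace (-1 + 1) with 0 by ring. rewrite s0, zl, s1. auto.
    + intros x y Ax Ay. apply Hcv; auto. lra.
Qed.
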